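(* Let $\varphi(x)=\sum_{i\ge0}\gamma_ix^i\in\mathbb{K}[[x]]$ and let $r$ be an odd negative integer. Assume $\gamma_i=0$ for each $i\le -r$. Then $\varphi\in\mathcal{F}_r$ if and only if $$\sum_{i=0}^m(-1)^i\binom{m}{i}\frac{m+i}{m}\gamma_{m-r+i}=0\quad\text{for each } m\ge1.$$
   Context: $\mathbb{K}\in\{\mathbb{Q},\mathbb{R},\mathbb{C}\}$. For $r\in\mathbb{Z}$, $\mathcal{F}_r$ denotes the space of $\varphi\in\mathbb{K}[[x]]$ with $\varphi(x/(x-1))=(1-x)^r\varphi(x)$. *)

(* Defs.v *)
From HB Require Import structures.
From mathcomp Require Import all_boot all_order all_algebra.
Set Implicit Arguments. Unset Strict Implicit. Unset Printing Implicit Defensive.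
Import Order.TTheory GRing.Theory Num.Theory.
Local Open Scope ring_scope.

(* Formal power series over K, represented by their coefficient sequences:
   phi : nat -> K stands for  \sum_i phi i x^i. *)
Section FPS.
Variable K : numFieldType.

Definition smul (f g : nat -> K) : nat -> K :=
  fun n => \sum_(i < n.+1) f i * g (n - i)%N.

Definition sone : nat -> K := fun n => (n == 0%N)%:R.

Definition sX : nat -> K := fun n => (n == 1%N)%:R.

Definition sexp (f : nat -> K) (k : nat) : nat -> K := iter k (smul f) sone.

Definition s1mX : nat -> K := fun n => sone n - sX n.

(* the series (1 - x)^{-1} = \sum_j x^j *)
Definition sgeom : nat -> K := fun _ => 1.

(* (1 - x)^r in K[[x]] for r : int *)
Definition s1mX_pow (r : int) : nat -> K :=
  match r with
  | Posz n => sexp s1mX n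
  | Negz n => sexp sgeom n.+1
  end.

(* the series x/(x-1) = - x (1-x)^{-1} *)
Definition sxdiv : nat -> K := fun n => - smul sX sgeom n.

(* composition phi(psi(x)), for psi with zero constant term: the coefficient
   of x^n only involves the powers psi^k with k <= n *)
Definition scomp (phi psi : nat -> K) : nat -> K :=
  fun n => \sum_(k < n.+1) phi k * sexp psi k n.

(* phi \in F_r  <->  phi(x/(x-1)) = (1-x)^r phi(x) *)
Definition in_F (r : int) (phi : nat -> K) : Prop :=
  forall n, scomp phi sxdiv n = smul (s1mX_pow r) phi n.

End FPS.

(* Main.v *)
Require Import Defs.
From HB Require Import structures.
From mathcomp Require Import all_boot all_order all_algebra.
From Stdlib Require Import FunctionalExtensionality.
From mathcomp Require Import zify ring.
Import Order.TTheory GRing.Theory Num.Theory.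
Local Open Scope ring_scope.


Definition tp {K : numFieldType} (f : nat -> K) (N : nat) : {poly K} :=
  \poly_(i < N.+1) f i.

Lemma smulE {K : numFieldType} (f g : nat -> K) n N : (n <= N)%N ->
  smul f g n = (tp f N * tp g N)`_n.
Proof.
move=> hn; rewrite coefM; apply: eq_bigr => i _.
have hi : (i < N.+1)%N by rewrite ltnS (leq_trans _ hn) // -ltnS.
rewrite !coef_poly hi ifT //; rewrite ltnS; apply: leq_trans (leq_subr _ _) hn.
Qed.

Lemma coefM_eq {K : numFieldType} (p q r : {poly K}) n :
  (forall i, (i <= n)%N -> p`_i = q`_i) -> (p * r)`_n = (q * r)`_n.
Proof.
move=> h; rewrite !coefM; apply: eq_bigr => i _; rewrite h //.
by rewrite -ltnS.
Qed.

Lemma smulC {K : numFieldType} (f g : nat -> K) : smul f g = smul g f.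
Proof.
apply: functional_extensionality => n.
by rewrite (smulE f g n n (leqnn n)) (smulE g f n n (leqnn n)) mulrC.
Qed.

Lemma smulA {K : numFieldType} (f g h : nat -> K) :
  smul (smul f g) h = smul f (smul g h).
Proof.
apply: functional_extensionality => n.
rewrite (smulE _ _ n n (leqnn n)) (smulE f _ n n (leqnn n)).
have e1 : (tp (smul f g) n * tp h n)`_n = ((tp f n * tp g n) * tp h n)`_n.
  by apply: coefM_eq => i hi; rewrite /tp coef_poly ltnS hi (smulE _ _ i n hi).
have e2 : (tp f n * tp (smul g h) n)`_n = (tp f n * (tp g n * tp h n))`_n.
  rewrite mulrC [tp f n * _]mulrC.
  by apply: coefM_eq => i hi; rewrite /tp coef_poly ltnS hi (smulE _ _ i n hi).
by rewrite e1 e2 mulrA.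
Qed.

Lemma smul1 {K : numFieldType} (f : nat -> K) : smul (sone K) f = f.
Proof.
apply: functional_extensionality => n.
rewrite /smul big_ord_recl /sone /= mul1r subn0 big1 ?addr0 // => i _.
by rewrite mul0r.
Qed.

Lemma smulBl {K : numFieldType} (f g h : nat -> K) :
  smul (fun n => f n - g n) h = (fun n => smul f h n - smul g h n).
Proof.
apply: functional_extensionality => n.
by rewrite /smul -sumrB; apply: eq_bigr => i _; rewrite mulrBl.
Qed.

Definition sscale {K : numFieldType} (c : K) (f : nat -> K) := fun n => c * f n.

Lemma smulZl {K : numFieldType} c (f g : nat -> K) :
  smul (sscale c f) g = sscale c (smul f g).
Proof.
apply: functional_extensionality => n.
by rewrite /smul /sscale mulr_sumr; apply: eq_bigr => i _; rewrite mulrA.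
Qed.

Lemma smulZr {K : numFieldType} c (f g : nat -> K) :
  smul f (sscale c g) = sscale c (smul f g).
Proof. by rewrite smulC smulZl smulC. Qed.

Lemma sexpS {K : numFieldType} (f : nat -> K) k :
  sexp f k.+1 = smul f (sexp f k).
Proof. by []. Qed.

Lemma sexpD {K : numFieldType} (f : nat -> K) a b :
  sexp f (a + b) = smul (sexp f a) (sexp f b).
Proof.
elim: a => [|a IH]; first by rewrite add0n smul1.
by rewrite addSn !sexpS IH smulA.
Qed.

Lemma sexpM {K : numFieldType} (f g : nat -> K) k :
  sexp (smul f g) k = smul (sexp f k) (sexp g k).
Proof.
elim: k => [|k IH]; first by rewrite /= smul1.
rewrite !sexpS IH !smulA; congr smul.
by rewrite -!smulA [smul g (sexp f k)]smulC.
Qed.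

Lemma sexpZ {K : numFieldType} c (f : nat -> K) k :
  sexp (sscale c f) k = sscale (c ^+ k) (sexp f k).
Proof.
elim: k => [|k IH].
  by apply: functional_extensionality => n; rewrite /sscale expr0 mul1r.
rewrite !sexpS IH smulZl smulZr; apply: functional_extensionality => n.
by rewrite /sscale mulrA exprS.
Qed.

Lemma sexp_one {K : numFieldType} k : sexp (sone K) k = sone K.
Proof. by elim: k => [|k IH] //; rewrite sexpS IH smul1. Qed.

Definition delta {K : numFieldType} (k : nat) : nat -> K := fun n => (n == k)%:R.

Lemma smul_delta {K : numFieldType} k (f : nat -> K) n :
  smul (delta k) f n = if (k <= n)%N then f (n - k)%N else 0.
Proof.
rewrite /smul /delta; case: ifP => hk.
  have hk' : (k < n.+1)%N by rewrite ltnS.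
  rewrite (bigD1 (Ordinal hk')) //= eqxx mul1r big1 ?addr0 // => i hi.
  have -> : (nat_of_ord i == k) = false.
    by apply/negbTE; move: hi; apply: contra => /eqP e; apply/eqP/val_inj.
  by rewrite mul0r.
rewrite big1 // => i _.
have -> : (nat_of_ord i == k) = false.
  apply/negbTE; apply/eqP => e; move: (ltn_ord i); rewrite e ltnS hk //.
by rewrite mul0r.
Qed.

Lemma sexp_sX {K : numFieldType} k : sexp (sX K) k = delta k.
Proof.
elim: k => [|k IH]; first by [].
rewrite sexpS IH smulC; apply: functional_extensionality => n.
rewrite smul_delta /sX /delta.
case: (leqP k n) => h.
  by rewrite (_ : (n - k == 1)%N = (n == k.+1)) //; apply/eqP/eqP; lia.
by rewrite (_ : (n == k.+1) = false) //; apply/eqP; lia.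
Qed.


Lemma sum_ext {K : numFieldType} (F : nat -> K) l n : (l <= n)%N ->
  (forall k, (l < k)%N -> (k <= n)%N -> F k = 0) ->
  \sum_(k < l.+1) F k = \sum_(k < n.+1) F k.
Proof.
move=> hl hF; rewrite (big_ord_widen n.+1 F) ?ltnS // big_mkcond.
apply: eq_bigr => i _; case: ifP => // /negbT; rewrite -leqNgt => h.
by rewrite hF // -ltnS.
Qed.

Lemma hockey b n : (\sum_(i < n.+1) 'C(n - i + b, b) = 'C(n + b.+1, b.+1))%N.
Proof.
elim: n => [|n IH]; first by rewrite big_ord1 sub0n add0n !binn.
rewrite big_ord_recl /= subn0.
rewrite (eq_bigr (fun i : 'I_n.+1 => 'C(n - i + b, b))); last first.
  by move=> i _; rewrite /bump /= add1n subSS.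
rewrite IH (_ : (n.+1 + b.+1 = (n + b.+1).+1)%N); last lia.
by rewrite binS addnC addSn addnS.
Qed.

Lemma sgeom_pow {K : numFieldType} b n :
  sexp (sgeom K) b.+1 n = ('C(n + b, b))%:R.
Proof.
elim: b n => [|b IH] n.
  by rewrite sexpS /= smulC smul1 /sgeom bin0.
rewrite sexpS /smul (eq_bigr (fun i : 'I_n.+1 => ('C(n - i + b, b))%:R)).
  by rewrite -natr_sum hockey addnS.
by move=> i _; rewrite IH /sgeom mul1r.
Qed.

Lemma sgeomM {K : numFieldType} : smul (s1mX K) (sgeom K) = sone K.
Proof.
rewrite /s1mX smulBl smul1; apply: functional_extensionality => n.
change (sX K) with (delta (K:=K) 1); rewrite smul_delta /sgeom /sone.
by case: n => [|n] //=; rewrite ?subr0 ?subrr.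
Qed.

Lemma sexp_low {K : numFieldType} (f : nat -> K) k l :
  f 0%N = 0 -> (l < k)%N -> sexp f k l = 0.
Proof.
move=> f0; elim: k l => [|k IH] l //= hl.
rewrite /smul big1 // => i _.
case: (posnP i) => [->|hi]; first by rewrite f0 mul0r.
by rewrite IH ?mulr0 //; have := ltn_ord i; lia.
Qed.

Lemma sxdivE {K : numFieldType} :
  sxdiv K = sscale (-1) (smul (sX K) (sgeom K)).
Proof. by apply: functional_extensionality => n; rewrite /sscale mulN1r. Qed.

Lemma R_formula {K : numFieldType} s k n : (s < k)%N ->
  smul (sexp (s1mX K) s) (sexp (sxdiv K) k) n =
  if (k <= n)%N then (-1) ^+ k * ('C(n - s.+1, k - s.+1))%:R else 0.
Proof.
move=> hsk; rewrite sxdivE sexpZ sexpM smulZr sexp_sX.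
have -> : k = (s + (k - s.+1).+1)%N by lia.
rewrite sexpD.
have -> : smul (sexp (s1mX K) s) (smul (delta (s + (k - s.+1).+1))
             (smul (sexp (sgeom K) s) (sexp (sgeom K) (k - s.+1).+1)))
   = smul (delta (s + (k - s.+1).+1)) (sexp (sgeom K) (k - s.+1).+1).
  have MA : smul (sexp (s1mX K) s) (sexp (sgeom K) s) = sone K.
    by rewrite -sexpM sgeomM sexp_one.
  rewrite -smulA [smul (sexp (s1mX K) s) (delta _)]smulC smulA.
  by rewrite -[smul (sexp (s1mX K) s) (smul _ _)]smulA MA smul1.
rewrite /sscale smul_delta.
case: ifP => h; last by rewrite mulr0.
rewrite sgeom_pow (_ : (n - (s + (k - s.+1).+1) + (k - s.+1) = n - s.+1)%N); last lia.
by rewrite (_ : (s + (k - s.+1).+1 - s.+1 = k - s.+1)%N); last lia.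
Qed.


Definition Ssum {K : numFieldType} (M a b : nat) : K :=
  \sum_(i < M.+1) (-1) ^+ i * ('C(M, i))%:R * ('C(a + i, b))%:R.

Lemma S_rec {K : numFieldType} M a b :
  Ssum (K:=K) M.+1 a b = Ssum M a b - Ssum M a.+1 b.
Proof.
rewrite /Ssum big_ord_recl.
rewrite [X in _ = X - _](_ : _ = \sum_(i < M.+2) (-1) ^+ i * ('C(M, i))%:R
                                   * ('C(a + i, b))%:R :> K); last first.
  by rewrite [in RHS]big_ord_recr /= bin_small // mulr0 mul0r addr0.
rewrite [in RHS]big_ord_recl !bin0 -addrA; congr (_ + _).
rewrite -sumrB; apply: eq_bigr => i _; rewrite lift0 binS natrD.
rewrite addnS -addSn exprS; ring.
Qed.

Lemma S_val {K : numFieldType} M a b :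
  Ssum (K:=K) M a b = if (M <= b)%N then (-1) ^+ M * ('C(a, b - M))%:R else 0.
Proof.
elim: M a => [|M IH] a.
  by rewrite /Ssum big_ord1 expr0 bin0 !mul1r addn0 subn0.
rewrite S_rec !IH.
case: (ltngtP M b) => h.
- rewrite (_ : (b - M = (b - M.+1).+1)%N); last lia.
  rewrite binS natrD exprS; ring.
- by rewrite subrr.
- by subst b; rewrite subnn !bin0 subrr.
Qed.

Definition Bt {K : numFieldType} (g : nat -> K) : nat -> K :=
  fun a => \sum_(b < a.+1) (-1) ^+ b * ('C(a, b))%:R * g b.

Lemma Bt_inv {K : numFieldType} (g : nat -> K) a : Bt (Bt g) a = g a.
Proof.
rewrite /Bt.
rewrite (eq_bigr (fun b : 'I_a.+1 => \sum_(c < a.+1)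
   (-1) ^+ b * ('C(a, b))%:R * ((-1) ^+ c * ('C(b, c))%:R * g c))); last first.
  move=> b _; rewrite mulr_sumr (@sum_ext _ (fun c => (-1) ^+ b * ('C(a, b))%:R * ((-1) ^+ c * ('C(b, c))%:R * g c)) b a) //.
    by rewrite -ltnS.
  by move=> k hk _; rewrite (bin_small hk) mulr0 mul0r mulr0.
rewrite exchange_big /=.
rewrite (eq_bigr (fun c : 'I_a.+1 => (-1) ^+ c * g c * Ssum a 0 c)); last first.
  move=> c _; rewrite /Ssum mulr_sumr; apply: eq_bigr => b _; rewrite add0n; ring.
rewrite big_ord_recr /= big1 ?add0r.
  by rewrite S_val leqnn subnn bin0 mulr1 mulrAC -expr2 -exprM mulnC exprM sqrrN !expr1n mul1r.
move=> c _; rewrite S_val ifF ?mulr0 //; apply/negbTE; rewrite -ltnNge; exact: ltn_ord.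
Qed.

Definition cm {K : numFieldType} (m : nat) (g : nat -> K) : K :=
  \sum_(i < m.+1) (-1) ^+ i * ('C(m, i))%:R * ((m + i)%:R / m%:R) * g (m.-1 + i)%N.

Definition w {K : numFieldType} (n i : nat) : K :=
  (-1) ^+ i * ('C(n.+1, i))%:R * ((n.+1 + i)%:R / (n.+1)%:R).

Lemma hb {K : numFieldType} n j :
  ('C(n.+1, j.+1))%:R * (j.+1)%:R / (n.+1)%:R = ('C(n, j))%:R :> K.
Proof.
have nz : (n.+1)%:R != 0 :> K by rewrite pnatr_eq0.
by rewrite -natrM mulnC -mul_bin_diag natrM mulrAC divff // mul1r.
Qed.

Lemma wsplit {K : numFieldType} n b :
  \sum_(i < n.+2) w (K:=K) n i * ('C(n + i, b))%:R = Ssum n.+1 n b - Ssum n n.+1 b.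
Proof.
have nz : (n.+1)%:R != 0 :> K by rewrite pnatr_eq0.
transitivity (\sum_(i < n.+2) ((-1) ^+ i * ('C(n.+1, i))%:R * ('C(n + i, b))%:R
   + (-1) ^+ i * (('C(n.+1, i))%:R * i%:R / (n.+1)%:R) * ('C(n + i, b))%:R : K)).
  apply: eq_bigr => i _; rewrite /w natrD mulrDl divff //; ring.
rewrite big_split /=; congr (_ + _).
rewrite big_ord_recl /= mulr0 !mul0r mulr0 mul0r add0r /Ssum -sumrN.
apply: eq_bigr => j _; rewrite /bump /= add1n hb exprS addnS -addSn; ring.
Qed.

Lemma coef_lo {K : numFieldType} n b : (b < n)%N ->
  Ssum (K:=K) n.+1 n b - Ssum n n.+1 b = 0.
Proof.
move=> h; rewrite !S_val !ifF ?subrr //; apply/negbTE; rewrite -ltnNge //.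
exact: ltnW.
Qed.

Lemma coef_hi {K : numFieldType} n p :
  (-1) ^+ (n + p) * (Ssum (K:=K) n.+1 n (n + p) - Ssum n n.+1 (n + p)) = - w n p.
Proof.
have nz : (n.+1)%:R != 0 :> K by rewrite pnatr_eq0.
rewrite !S_val leq_addr /w.
case: p => [|q].
  rewrite ifF; last by apply/negbTE; rewrite -ltnNge addn0.
  rewrite addn0 subnn !bin0 addn0 divff // -(signr_odd _ n).
  by case: (odd n); rewrite /= ?expr0 ?expr1; ring.
rewrite ifT; last by rewrite addnS ltnS leq_addr.
rewrite (_ : (n + q.+1 - n.+1 = q)%N); last lia.
rewrite (_ : (n + q.+1 - n = q.+1)%N); last lia.
rewrite -(hb (K:=K) n q) !exprD !exprS -(signr_odd _ n) -(signr_odd _ q).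
case: (odd n); case: (odd q); rewrite /= ?expr0 ?expr1; field; by rewrite -natr1 addrC in nz.
Qed.

Lemma key {K : numFieldType} n (g : nat -> K) :
  cm n.+1 (Bt g) = - cm n.+1 g.
Proof.
rewrite /cm /Bt /=.
rewrite (eq_bigr (fun i : 'I_n.+2 => \sum_(b < (n + n.+1).+1)
    w n i * ((-1) ^+ b * ('C(n + i, b))%:R * g b))); last first.
  move=> i _; rewrite mulr_sumr.
  rewrite (@sum_ext _ (fun b => w n i * ((-1) ^+ b * ('C(n + i, b))%:R * g b)) (n + i) (n + n.+1)).
  - by [].
  - by rewrite leq_add2l -ltnS.
  - by move=> k hk _; rewrite (bin_small hk) mulr0 mul0r mulr0.
rewrite exchange_big /=.
rewrite (eq_bigr (fun b : 'I_(n + n.+1).+1 =>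
   (-1) ^+ b * (Ssum n.+1 n b - Ssum n n.+1 b) * g b)); last first.
  move=> b _; rewrite -wsplit mulr_sumr mulr_suml; apply: eq_bigr => i _; ring.
have E : (n + n.+1).+1 = (n + n.+2)%N by rewrite [RHS]addnS.
rewrite E.
rewrite big_split_ord /= big1 ?add0r; last first.
  by move=> b _; rewrite coef_lo ?mulr0 ?mul0r //; exact: ltn_ord.
rewrite -sumrN; apply: eq_bigr => p _; rewrite coef_hi /w; ring.
Qed.

Lemma xNx {K : numFieldType} (x : K) : x = - x -> x = 0.
Proof.
move/eqP; rewrite -subr_eq0 opprK -mulr2n mulrn_eq0 /= => /eqP //.
Qed.

Lemma uniq_zero {K : numFieldType} (h : nat -> K) :
  (forall a, Bt h a = - h a) -> (forall n, cm n.+1 h = 0) -> forall a, h a = 0.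
Proof.
move=> HB HC.
suff H : forall N a, (a < N)%N -> h a = 0 by move=> a; apply: (H a.+1).
elim=> [|N IH] a ha //.
move: ha; rewrite ltnS leq_eqVlt => /orP [/eqP ->|]; last exact: IH.
case: (boolP (odd N)) => hN.
- have HN : N = (N./2 + (N./2).+1)%N.
    by rewrite -{1}(odd_double_half N) hN addnS -addnn.
  have := HC N./2; rewrite /cm big_ord_recr /= big1; last first.
    move=> i _; rewrite IH ?mulr0 //; have := ltn_ord i; lia.
  rewrite add0r -HN binn natrD mulrDl divff ?pnatr_eq0 // mulr1.
  move/eqP; rewrite !mulf_eq0 signr_eq0 /= => /orP [|/eqP //].
  rewrite -mulr2n mulrn_eq0 /= oner_eq0 //.
- have := HB N; rewrite /Bt big_ord_recr /= big1; last first.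
    move=> i _; rewrite IH ?mulr0 //; exact: ltn_ord.
  by rewrite add0r binn mulr1 -signr_odd (negbTE hN) expr0 mul1r => /xNx.
Qed.


Lemma MA {K : numFieldType} s :
  smul (sexp (s1mX K) s) (sexp (sgeom K) s) = sone K.
Proof. by rewrite -sexpM sgeomM sexp_one. Qed.

Lemma inF_iff {K : numFieldType} s (gam : nat -> K) :
  (forall n, scomp gam (sxdiv K) n = smul (sexp (sgeom K) s) gam n) <->
  smul (sexp (s1mX K) s) (scomp gam (sxdiv K)) = gam.
Proof.
split.
  move=> E; have -> : scomp gam (sxdiv K) = smul (sexp (sgeom K) s) gam.
    by apply: functional_extensionality.
  by rewrite -smulA MA smul1.
move=> E n; rewrite -{2}E -smulA [smul (sexp (sgeom K) s) _]smulC MA smul1 //.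
Qed.

Lemma sxdiv0 {K : numFieldType} : sxdiv K 0%N = 0.
Proof. by rewrite /sxdiv /smul big_ord1 /sX /= mul0r oppr0. Qed.

Lemma MP_formula {K : numFieldType} s (gam : nat -> K) n :
  smul (sexp (s1mX K) s) (scomp gam (sxdiv K)) n =
  \sum_(k < n.+1) gam k * smul (sexp (s1mX K) s) (sexp (sxdiv K) k) n.
Proof.
rewrite /smul /scomp.
rewrite (eq_bigr (fun i : 'I_n.+1 => \sum_(k < n.+1)
   sexp (s1mX K) s i * (gam k * sexp (sxdiv K) k (n - i)))); last first.
  move=> i _; rewrite mulr_sumr.
  rewrite (@sum_ext _ (fun k => sexp (s1mX K) s i * (gam k * sexp (sxdiv K) k (n - i))) (n - i) n).
  - by [].
  - exact: leq_subr.
  - by move=> k hk _; rewrite (sexp_low _ _ _ sxdiv0 hk) !mulr0.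
rewrite exchange_big /=; apply: eq_bigr => k _; rewrite mulr_sumr.
by apply: eq_bigr => i _; ring.
Qed.

Lemma Bt_formula {K : numFieldType} s (gam : nat -> K) :
  odd s -> (forall i, (i <= s)%N -> gam i = 0) ->
  (forall a, smul (sexp (s1mX K) s) (scomp gam (sxdiv K)) (s.+1 + a)%N =
             Bt (fun b => gam (s.+1 + b)%N) a) /\
  (forall n, (n <= s)%N -> smul (sexp (s1mX K) s) (scomp gam (sxdiv K)) n = 0).
Proof.
move=> hs low; split.
  move=> a; rewrite MP_formula.
  have E : (s.+1 + a).+1 = (s.+1 + a.+1)%N by rewrite addnS.
  rewrite E big_split_ord /= big1 ?add0r; last first.
    by move=> k _; rewrite low ?mul0r // -ltnS.
  apply: eq_bigr => b _; have R := @R_formula K s (s.+1 + b) (s.+1 + a) (leq_addr _ _); simpl in R; rewrite R.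
  rewrite ifT; last by rewrite leq_add2l -ltnS.
  rewrite (_ : (s.+1 + a - s.+1 = a)%N); last lia.
  rewrite (_ : (s.+1 + b - s.+1 = b)%N); last lia.
  rewrite exprD -signr_odd /= hs /= expr0 mul1r; ring.
move=> n hn; rewrite MP_formula big1 // => k _; rewrite low ?mul0r //.
by apply: leq_trans hn; rewrite -ltnS.
Qed.

Lemma BtB {K : numFieldType} (f g : nat -> K) a :
  Bt (fun b => f b - g b) a = Bt f a - Bt g a.
Proof. by rewrite /Bt -sumrB; apply: eq_bigr => i _; rewrite mulrBr. Qed.

Lemma cmB {K : numFieldType} m (f g : nat -> K) :
  cm m (fun b => f b - g b) = cm m f - cm m g.
Proof. by rewrite /cm -sumrB; apply: eq_bigr => i _; rewrite mulrBr. Qed.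

Lemma Bt_cm {K : numFieldType} (g : nat -> K) :
  (forall a, Bt g a = g a) <-> (forall n, cm n.+1 g = 0).
Proof.
split.
  move=> E n; apply: xNx; rewrite -key.
  by have -> : Bt g = g by apply: functional_extensionality.
move=> C a.
have := @uniq_zero K (fun b => g b - Bt g b).
move=> /(_ _ _ a) H; apply/eqP; rewrite eq_sym -subr_eq0; apply/eqP; apply: H.
  by move=> b; rewrite BtB Bt_inv opprB.
by move=> n; rewrite cmB key C oppr0 subr0.
Qed.


Theorem corollary4p8 (K : numFieldType) (gamma : nat -> K) (r : int) :
  r < 0 -> odd `|r|%N ->
  (forall i : nat, (i <= `|r|)%N -> gamma i = 0) ->
  (in_F r gamma <->
   forall m : nat, (0 < m)%N ->
     \sum_(i < m.+1) (-1) ^+ i * 'C(m, i)%:R * ((m + i)%:R / m%:R)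
                     * gamma (m + `|r| + i)%N = 0).
Proof.
case: r => [n|k] //= _ hs low.
set s := k.+1.
have [HB Hlo] := @Bt_formula K s gamma hs low.
rewrite /in_F /= (inF_iff s gamma).
set g := fun b => gamma (s.+1 + b)%N.
have step1 : smul (sexp (s1mX K) s) (scomp gamma (sxdiv K)) = gamma <->
             (forall a, Bt g a = g a).
  split.
    by move=> E a; rewrite -HB E.
  move=> E; apply: functional_extensionality => n.
  case: (leqP n s) => hn; first by rewrite Hlo // low.
  have -> : n = (s.+1 + (n - s.+1))%N by lia.
  by rewrite HB E.
rewrite step1 Bt_cm; split.
  move=> C [|m] // _; rewrite -[RHS](C m) /cm; apply: eq_bigr => i _.
  by rewrite /g (_ : (m.+1 + s + i = s.+1 + (m.+1.-1 + i))%N) //; lia.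
move=> C m; rewrite -[RHS](C m.+1 isT) /cm; apply: eq_bigr => i _.
by rewrite /g (_ : (m.+1 + s + i = s.+1 + (m.+1.-1 + i))%N) //; lia.
Qed.
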